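(* Let $d$ and $k$ be positive integers and $\mathcal{X}$ a subset of $\mathbb{P}^d_\circ$ with $\kappa(\mathcal{X})\le k$. Then $|\mathcal{X}|\le\lfloor\lambda(d,k)\rfloor$. Moreover, let $p$ be the smallest positive integer with $k<\kappa_p$; if in addition (i) $|\mathcal{X}|=\lfloor\lambda(d,k)\rfloor$, (ii) $d$ is a proper divisor of $p$ (that is, $d$ divides $p$ and $d\neq p$), and (iii) $p/d$ divides $k-\kappa_{p-1}$, then $$B(d,p-1)\cap\mathbb{P}^d_\circ\subset\mathcal{X}\subset B(d,p)\cap\mathbb{P}^d_\circ.$$
   Context: A point of $\mathbb{Z}^d$ is primitive if its coordinates are relatively prime; $\mathbb{P}^d_\circ$ denotes the set of primitive points of $\mathbb{Z}^d$ whose first non-zero coordinate is positive. For a finite $\mathcal{X}\subset\mathbb{R}^d$, $\kappa(\mathcal{X})=\max_{1\le i\le d}\sum_{x\in\mathcal{X}}|x_i|$. $B(d,p)=\{x\in\mathbb{R}^d:\|x\|_1\le p\}$; for integers $p\ge0$, $N_p=|B(d,p)\cap\mathbb{P}^d_\circ|$ and $\kappa_p=\kappa(B(d,p)\cap\mathbb{P}^d_\circ)$ (so $N_0=\kappa_0=0$). For a positive integer $k$, with $p$ the smallest positive integer such that $k<\kappa_p$, $\lambda(d,k)=N_{p-1}+\frac{d(k-\kappa_{p-1})}{p}$. *)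

(* Defs.v *)
From HB Require Import structures.
From mathcomp Require Import all_boot all_order all_algebra.
Set Implicit Arguments. Unset Strict Implicit. Unset Printing Implicit Defensive.
Import Order.TTheory GRing.Theory Num.Theory.

Definition primitive (d : nat) (x : 'rV[int]_d) : bool :=
  (\big[gcdn/0%N]_(i < d) `|x ord0 i|%N) == 1%N.

Definition first_pos (d : nat) (x : 'rV[int]_d) : bool :=
  [exists i : 'I_d, (0 < x ord0 i)%R && [forall j : 'I_d, (j < i)%N ==> (x ord0 j == 0)]].

Definition inP (d : nat) (x : 'rV[int]_d) : bool := primitive x && first_pos x.

Definition l1 (d : nat) (x : 'rV[int]_d) : nat := \sum_(i < d) `|x ord0 i|%N.

Definition inBP (d p : nat) (x : 'rV[int]_d) : bool := (l1 x <= p)%N && inP x.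

(* kappa of a finite set (given as a duplicate-free list) *)
Definition kappa (d : nat) (X : seq 'rV[int]_d) : nat :=
  \max_(i < d) \sum_(x <- X) `|x ord0 i|%N.

(* all integer points of the box [-p,p]^d (duplicate-free) *)
Definition box (d p : nat) : seq 'rV[int]_d :=
  [seq map_mx (fun a : 'I_(2 * p).+1 => ((a : nat)%:Z - p%:Z)%R) v
  | v : 'rV['I_(2 * p).+1]_d].

Definition BP (d p : nat) : seq 'rV[int]_d := [seq x <- box d p | inBP p x].

Definition Np (d p : nat) : nat := size (BP d p).
Definition kappap (d p : nat) : nat := kappa (BP d p).

(* lambda(d,k), given p = smallest positive integer with k < kappa_p *)
Definition lambda (d k p : nat) : rat :=
  ((Np d p.-1)%:Q + (((d : int) * ((k : int) - (kappap d p.-1 : int)))%:~R : rat) / p%:Q)%R.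

(* Main.v *)
Require Import Defs.
From HB Require Import structures.
From mathcomp Require Import all_boot all_order all_algebra.
From mathcomp Require Import zify perm ring.
Import Order.TTheory GRing.Theory Num.Theory.
Set Implicit Arguments. Unset Strict Implicit. Unset Printing Implicit Defensive.

Lemma sum_ge_c (T : eqType) (s : seq T) (F : T -> nat) c :
  (forall x, x \in s -> c <= F x) -> c * size s <= \sum_(x <- s) F x.
Proof.
elim: s => [|z s IH] H; first by rewrite big_nil muln0.
rewrite big_cons /=.
have h1 := H z (mem_head _ _).
have h2 : c * size s <= \sum_(x <- s) F x.
  by apply: IH => x xs; apply: H; rewrite inE xs orbT.
lia.
Qed.

Lemma sum_ge_c1 (T : eqType) (s : seq T) (F : T -> nat) c :
  (forall x, x \in s -> c <= F x) -> forall y, y \in s ->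
  c * size s + (F y - c) <= \sum_(x <- s) F x.
Proof.
elim: s => [|z s IH] H y //.
rewrite big_cons /= inE => /orP [/eqP ->|ys].
  have : c * size s <= \sum_(x <- s) F x.
    by apply: sum_ge_c => x xs; apply: H; rewrite inE xs orbT.
  have := H z (mem_head _ _); lia.
have H' : forall x, x \in s -> c <= F x by move=> x xs; apply: H; rewrite inE xs orbT.
have := IH H' y ys.
have := H z (mem_head _ _); lia.
Qed.

Lemma sum_le_c (T : eqType) (s : seq T) (F : T -> nat) c :
  (forall x, x \in s -> F x <= c) -> \sum_(x <- s) F x <= c * size s.
Proof.
elim: s => [|z s IH] H; first by rewrite big_nil.
rewrite big_cons /=.
have h1 := H z (mem_head _ _).
have h2 : \sum_(x <- s) F x <= c * size s.
  by apply: IH => x xs; apply: H; rewrite inE xs orbT.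
lia.
Qed.

Section Box.
Variable d : nat.

Lemma box_uniq q : uniq (box d q).
Proof.
rewrite /box map_inj_uniq ?enum_uniq //.
move=> v w E; apply/rowP => i.
have := congr1 (fun M : 'rV[int]_d => M ord0 i) E; rewrite !mxE => h.
apply/val_inj => /=; move: h; rewrite -!(addrC (- _)%R); move/addrI; by case.
Qed.

Lemma mem_box q (x : 'rV[int]_d) : l1 x <= q -> x \in box d q.
Proof.
move=> hl.
have hb : forall i, (`|x ord0 i| <= q)%N.
  move=> i; apply: leq_trans hl; rewrite /l1 (bigD1 i) //=; exact: leq_addr.
pose v : 'rV['I_(2 * q).+1]_d := (\row_(i < d) inord (absz (x ord0 i + q%:Z)%R))%R.
have -> : x = map_mx (fun a : 'I_(2 * q).+1 => ((a : nat)%:Z - q%:Z)%R) v.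
  apply/rowP => i; rewrite !mxE inordK; have := hb i;
  change (x 0%R i) with (x ord0 i); move: (x ord0 i) => a; lia.
rewrite /box; apply: map_f; exact: mem_enum.
Qed.

Lemma mem_BP q (x : 'rV[int]_d) : (x \in BP d q) = inBP q x.
Proof.
rewrite /BP mem_filter; case h: (inBP q x) => //=.
apply: mem_box; by case/andP: h.
Qed.

Lemma BP_uniq q : uniq (BP d q).
Proof. by rewrite filter_uniq // box_uniq. Qed.

End Box.

Section Sym.
Variables (d : nat).

Lemma oppE (x : 'rV[int]_d) k : (-x)%R ord0 k = (- x ord0 k)%R.
Proof. by rewrite mxE. Qed.

Lemma l1N (x : 'rV[int]_d) : l1 (-x)%R = l1 x.
Proof. by apply: eq_bigr => k _; rewrite mxE abszN. Qed.

Lemma primN (x : 'rV[int]_d) : primitive (-x)%R = primitive x.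
Proof. by rewrite /primitive; congr (_ == _); apply: eq_bigr => k _; rewrite mxE abszN. Qed.

Lemma fp_excl (y : 'rV[int]_d) : first_pos y -> first_pos (-y)%R -> False.
Proof.
move=> /existsP [a /andP [ha /forallP Ha]] /existsP [b /andP [hb /forallP Hb]].
rewrite oppE in hb.
case: (ltngtP a b) => [ab|ba|e].
- have := Hb a; rewrite ab /= oppE oppr_eq0 => /eqP h; by rewrite h ltxx in ha.
- have := Ha b; rewrite ba /= => /eqP h; by rewrite h oppr0 ltxx in hb.
- have e' : a = b by apply: val_inj.
  subst b; move: ha hb; move: (y ord0 a) => t; lia.
Qed.

Lemma prim_nz (y : 'rV[int]_d) : primitive y -> exists k, y ord0 k != 0%R.
Proof.
move=> hy; apply/existsP; move: hy; apply: contraLR => /existsPn H.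
rewrite /primitive big1 // => k _; have := H k; rewrite negbK => /eqP ->; done.
Qed.

Lemma fp_tot (y : 'rV[int]_d) : primitive y -> first_pos y || first_pos (-y)%R.
Proof.
move=> /prim_nz [k hk].
case: (@arg_minnP _ k (fun k => y ord0 k != 0%R) val hk) => m hm hmin.
have hz : forall j : 'I_d, (j < m)%N ==> (y ord0 j == 0%R).
  move=> j; apply/implyP => jm; apply/negPn/negP => hj.
  have := hmin j hj; rewrite leqNgt jm //.
have hz' : forall j : 'I_d, (j < m)%N ==> ((-y)%R ord0 j == 0%R).
  move=> j; rewrite oppE oppr_eq0; exact: hz.
move: hm; move Ey: (y ord0 m) => t ht.
case: (ltrgt0P t) ht => // tp _.
  apply/orP; left; apply/existsP; exists m; rewrite Ey tp /=; exact/forallP.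
apply/orP; right; apply/existsP; exists m; rewrite oppE Ey oppr_gt0 tp /=; exact/forallP.
Qed.

Definition nz (y : 'rV[int]_d) := if first_pos y then y else (-y)%R.

Lemma inP_nz y : primitive y -> inP (nz y).
Proof.
move=> hy; rewrite /nz /inP; case h: (first_pos y); first by rewrite hy.
by rewrite primN hy /=; have := fp_tot hy; rewrite h.
Qed.

Lemma l1_nz y : l1 (nz y) = l1 y.
Proof. by rewrite /nz; case: ifP => // _; rewrite l1N. Qed.

Lemma nz_abs y k : `|nz y ord0 k|%N = `|y ord0 k|%N.
Proof. by rewrite /nz; case: ifP => // _; rewrite oppE abszN. Qed.

Variables (i j : 'I_d).
Definition swp (x : 'rV[int]_d) : 'rV[int]_d := (\row_(k < d) x ord0 (tperm i j k))%R.
Definition ff x := nz (swp x).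

Lemma l1_swp x : l1 (swp x) = l1 x.
Proof.
rewrite /l1 [RHS](reindex_inj (h := tperm i j)) /=; last exact: perm_inj.
by apply: eq_bigr => k _; rewrite mxE.
Qed.

Lemma prim_swp x : primitive (swp x) = primitive x.
Proof.
rewrite /primitive [X in _ = (X == _)](reindex_inj (h := tperm i j)) /=; last exact: perm_inj.
by congr (_ == _); apply: eq_bigr => k _; rewrite mxE.
Qed.

Lemma swpK x : swp (swp x) = x.
Proof. by apply/rowP => k; rewrite !mxE tpermK. Qed.

Lemma swpN x : swp (-x)%R = (- swp x)%R.
Proof. by apply/rowP => k; rewrite !mxE. Qed.

Lemma ffK x : inP x -> ff (ff x) = x.
Proof.
case/andP => _ fx; rewrite /ff /nz; case: (first_pos (swp x)).
  by rewrite swpK fx.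
rewrite swpN swpK; case: ifP => h; [case: (fp_excl fx h) | by rewrite ?opprK].
Qed.

Lemma inP_ff x : inP x -> inP (ff x).
Proof. by case/andP => px _; apply: inP_nz; rewrite prim_swp. Qed.

Lemma l1_ff x : l1 (ff x) = l1 x.
Proof. by rewrite /ff l1_nz l1_swp. Qed.

Lemma abs_ff x : `|ff x ord0 i|%N = `|x ord0 j|%N.
Proof. by rewrite /ff nz_abs mxE tpermL. Qed.

Lemma sym_sum q : \sum_(x <- BP d q) `|x ord0 i|%N = \sum_(x <- BP d q) `|x ord0 j|%N.
Proof.
have inB : forall x, x \in BP d q -> ff x \in BP d q.
  move=> x; rewrite !mem_BP => /andP [h1 h2]; by rewrite /inBP l1_ff h1 inP_ff.
have pe : perm_eq [seq ff x | x <- BP d q] (BP d q).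
  apply: uniq_perm; [|exact: BP_uniq|].
  - rewrite map_inj_in_uniq; first exact: BP_uniq.
    move=> x y hx hy e.
    by rewrite -(ffK (x:=x)) ?e ?ffK //; move: hx hy; rewrite !mem_BP => /andP [_ ?] /andP [_ ?].
  - move=> y; apply/mapP/idP => [[x hx ->]|hy]; first exact: inB.
    exists (ff y); first exact: inB.
    by rewrite ffK //; move: hy; rewrite mem_BP => /andP [].
rewrite -(perm_big _ pe) big_map; apply: eq_bigr => x _; exact: abs_ff.
Qed.

End Sym.

Lemma sum_l1 d (L : seq 'rV[int]_d) :
  \sum_(x <- L) l1 x = \sum_(i < d) \sum_(x <- L) `|x ord0 i|%N.
Proof. by rewrite /l1 exchange_big. Qed.

Lemma sum_l1_le d (L : seq 'rV[int]_d) : \sum_(x <- L) l1 x <= d * kappa L.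
Proof.
rewrite sum_l1 -[X in X * _]card_ord -sum_nat_const.
apply: leq_sum => i _; rewrite /kappa.
exact: (leq_bigmax (F := fun i : 'I_d => \sum_(x <- L) `|x ord0 i|%N)).
Qed.

Lemma sum_l1_BP d q : 0 < d -> d * kappap d q <= \sum_(x <- BP d q) l1 x.
Proof.
move=> d0; pose i0 : 'I_d := Ordinal d0.
have E : forall i : 'I_d, \sum_(x <- BP d q) `|x ord0 i|%N = \sum_(x <- BP d q) `|x ord0 i0|%N.
  by move=> i; apply: sym_sum.
rewrite sum_l1 (eq_bigr _ (fun i _ => E i)) sum_nat_const card_ord.
rewrite leq_mul2l; apply/orP; right.
rewrite /kappap /kappa; apply/bigmax_leqP => i _; by rewrite E.
Qed.

Lemma kappa0 d : kappap d 0 = 0.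
Proof.
have H : forall x : 'rV[int]_d, inBP 0 x = false.
  move=> x; apply/negbTE/negP => /andP [hl /andP [hp _]].
  have hz : forall i, x ord0 i = 0%R.
    move=> i; have : `|x ord0 i|%N <= 0.
      apply: leq_trans hl; rewrite /l1 (bigD1 i) //=; exact: leq_addr.
    by rewrite leqn0 absz_eq0 => /eqP.
  move: hp; rewrite /primitive big1 // => i _; by rewrite hz.
rewrite /kappap /BP (eq_filter (a2 := pred0)) ?filter_pred0; last by move=> x; rewrite H.
by rewrite /kappa big1 // => i _; rewrite big_nil.
Qed.

Theorem lemma3p1 (d k : nat) (X : seq 'rV[int]_d) (p : nat) :
  (0 < d)%N -> (0 < k)%N ->
  uniq X -> (forall x, x \in X -> inP x) ->
  (kappa X <= k)%N ->
  (0 < p)%N -> (k < kappap d p)%N ->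
  (forall q, (0 < q)%N -> (q < p)%N -> (kappap d q <= k)%N) ->
  (((size X : nat) : int) <= Num.floor (lambda d k p))%R /\
  (((size X : nat) : int) = Num.floor (lambda d k p) ->
   (d %| p)%N -> d != p -> (p %/ d %| k - kappap d p.-1)%N ->
   (forall x : 'rV[int]_d, inBP p.-1 x -> x \in X) /\
   (forall x, x \in X -> inBP p x)).
Proof.
move=> d0 k0 uX inX kX p0 kp hmin.
have KK : kappap d p.-1 <= k.
  case E: p.-1 => [|q]; first by rewrite kappa0.
  apply: hmin => //; lia.
set K := kappap d p.-1 in KK *.
set B := BP d p.-1.
set N := Np d p.-1.
have NB : N = size B by [].
pose P := fun x : 'rV[int]_d => l1 x <= p.-1.
set XB := filter P X; set XO := filter (predC P) X.
set BX := filter (mem X) B; set BN := filter (predC (mem X)) B.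
have hT : \sum_(x <- X) l1 x <= d * k.
  apply: leq_trans (sum_l1_le X) _; by rewrite leq_mul2l kX orbT.
have eT : \sum_(x <- X) l1 x = \sum_(x <- XB) l1 x + \sum_(x <- XO) l1 x.
  by rewrite -big_cat (perm_big _ (introT permPl (perm_filterC P X))).
have eW : \sum_(x <- B) l1 x = \sum_(x <- BX) l1 x + \sum_(x <- BN) l1 x.
  by rewrite -big_cat (perm_big _ (introT permPl (perm_filterC (mem X) B))).
have pe : perm_eq XB BX.
  apply: uniq_perm; [exact: filter_uniq | exact/filter_uniq/BP_uniq |].
  move=> x; rewrite mem_filter (mem_filter (mem X)) /B mem_BP /inBP.
  have -> : mem X x = (x \in X) by []. case hx: (x \in X) => /=; last by rewrite andbF.
  by rewrite (inX x hx) andbT.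
have sX : size X = size XB + size XO by rewrite -(count_predC P X) !size_filter.
have sB : N = size BX + size BN by rewrite NB -(count_predC (mem X) B) !size_filter.
have sXB : size XB = size BX by apply: perm_size.
have s1 : \sum_(x <- XB) l1 x = \sum_(x <- BX) l1 x by apply: perm_big.
have s2ge : p * size XO <= \sum_(x <- XO) l1 x.
  apply: sum_ge_c => x; rewrite mem_filter /= /P => /andP [h _]; lia.
have ule : \sum_(x <- BN) l1 x <= p.-1 * size BN.
  apply: sum_le_c => x; rewrite mem_filter /B mem_BP => /andP [_ /andP [h _]] //.
have W := sum_l1_BP p.-1 d0.
rewrite -/B -/K in W.
have main : p * size X + size BN + (\sum_(x <- XO) l1 x - p * size XO) <= p * N + d * (k - K).
  move: hT eT eW sX sB sXB s1 s2ge ule W KK p0.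
  move: (\sum_(x <- X) l1 x) (\sum_(x <- XB) l1 x) (\sum_(x <- XO) l1 x)
        (\sum_(x <- B) l1 x) (\sum_(x <- BX) l1 x) (\sum_(x <- BN) l1 x) => *.
  nia.
set D := d * (k - K) in main.
have Lq : lambda d k p = (((p * N + D)%N)%:R / p%:R : rat)%R.
  rewrite /lambda -/K -/N subzn // -PoszM.
  change (((d * (k - K))%N : int)%:~R : rat) with ((d * (k - K))%N%:R : rat).
  rewrite -/D natrD natrM; field; rewrite pnatr_eq0 -lt0n //.
have hp : (0 < p%:R :> rat)%R by rewrite ltr0n.
have le1 : ((size X)%:R <= ((p * N + D)%N%:R / p%:R : rat))%R.
  rewrite ler_pdivlMr // -natrM ler_nat; lia.
split.
  rewrite floor_ge_int Lq; exact: le1.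
move=> eqX dp dnp dk.
have [m Dm] : exists m, D = m * p.
  case/dvdnP: dk => m' hm; exists m'.
  by rewrite /D hm mulnCA [d * _]mulnC divnK.
have Lq2 : lambda d k p = ((N + m)%N%:~R : rat)%R.
  rewrite Lq Dm (_ : (p * N + m * p = (N + m) * p)%N); last lia.
  by rewrite natrM mulfK // lt0r_neq0.
move: eqX; rewrite Lq2 intrKfloor => /eqP; rewrite eqz_nat => /eqP eqX.
have eqs : p * size X = p * N + D by rewrite eqX Dm; lia.
have BN0 : size BN = 0 by lia.
have XO0 : \sum_(x <- XO) l1 x <= p * size XO by lia.
split.
  move=> x hx; apply/negPn/negP => nx.
  have : x \in BN by rewrite mem_filter /= nx /B mem_BP.
  have -> : BN = [::] by apply/eqP; rewrite -size_eq0 BN0.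
  by [].
move=> x xX; rewrite /inBP (inX x xX) andbT.
case hP: (P x); first by move: hP; rewrite /P; lia.
have xO : x \in XO by rewrite mem_filter /= hP.
have H : forall y, y \in XO -> p <= l1 y.
  by move=> y; rewrite mem_filter /= /P => /andP [h _]; lia.
have := sum_ge_c1 H xO; move: XO0.
move: (\sum_(x <- XO) l1 x) => S.
move: (size XO) (l1 x) => a b.
lia.
Qed.
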